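(* Let $A\in M_n(R)$ be a non-singular triangular matrix, and write $f_A(x)=\sum_{k=0}^n a_kx^k$, $f_{A^\nabla}(x)=\sum_{k=0}^n b_kx^k$. Then $\det(A)f_{A^\nabla}(x)=x^nf_A(x^{-1})$, i.e. $\det(A)b_k=a_{n-k}$ for all $k=0,\dots,n$.
   Context: Supertropical semiring $R=T\cup G\cup\{-\infty\}$: $T=\mathcal G$ an ordered abelian group (tangible), $G=\{a^\nu\}$ a copy (ghost); $a+b$ is the element of larger $\nu$-value if the $\nu$-values differ and $a^\nu$ if equal; multiplication adds $\nu$-values, is ghost if a factor is ghost, $-\infty$ absorbing; $0_R=-\infty$, $1_R=0$. $\det(A)=\sum_{\sigma\in S_n}\prod_i a_{i,\sigma(i)}$; $A$ non-singular iff $\det(A)\in T$. $\operatorname{adj}(A)_{i,j}=\det(A_{j,i})$; $A^\nabla=\det(A)^{-1}\operatorname{adj}(A)$. Triangular means all entries above (or all below) the diagonal equal $0_R$. The characteristic polynomial $f_M(x)=\det(xI+M)$ has $x^k$-coefficient the sum of determinants of all $(n-k)\times(n-k)$ principal submatrices of $M$; $x^nf_A(x^{-1})$ denotes the polynomial $\sum_{k=0}^n a_{n-k}x^k$. *)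

(* Defs.v *)
From HB Require Import structures.
From mathcomp Require Import all_boot all_order all_algebra all_fingroup.
Set Implicit Arguments. Unset Strict Implicit. Unset Printing Implicit Defensive.
Import GRing.Theory.

(* An ordered abelian group: an additive abelian group G (written additively,
   so that the tangible product a*b is a+b) with a total order [le] that is
   translation invariant. *)
Definition ordered_abgroup (G : zmodType) (le : rel G) : Prop :=
  [/\ reflexive le, antisymmetric le, transitive le, total le &
      forall a b c : G, le a b -> le (a + c)%R (b + c)%R].

(* Elements of R = T ∪ G ∪ {-∞}. *)
Inductive st (G : Type) := NegInf | Tan of G | Gho of G.
Arguments NegInf {G}.

Section Supertropical.
Variables (G : zmodType) (le : rel G).

Definition nu (x : st G) : G :=
  match x with NegInf => 0%R | Tan a => a | Gho a => a end.

Definition sadd (x y : st G) : st G :=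
  match x, y with
  | NegInf, _ => y
  | _, NegInf => x
  | _, _ => if nu x == nu y then Gho (nu x)
            else if le (nu x) (nu y) then y else x
  end.

Definition smul (x y : st G) : st G :=
  match x, y with
  | NegInf, _ => NegInf
  | _, NegInf => NegInf
  | Tan a, Tan b => Tan (a + b)%R
  | _, _ => Gho (nu x + nu y)%R
  end.

Definition sone : st G := Tan 0%R.

Definition sinv (x : st G) : st G :=
  match x with NegInf => NegInf | Tan a => Tan (- a)%R | Gho a => Gho (- a)%R end.

Definition tangible (x : st G) : bool :=
  if x is Tan _ then true else false.

Definition sdet (m : nat) (A : 'M[st G]_m) : st G :=
  \big[sadd/NegInf]_(s : 'S_m) \big[smul/sone]_(i < m) A i (s i).

Definition sminor (n : nat) (A : 'M[st G]_n) (r c : 'I_n) : 'M[st G]_(n.-1) :=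
  \matrix_(a < n.-1, b < n.-1) A (insubd r (bump r a)) (insubd c (bump c b)).

Definition sadj (n : nat) (A : 'M[st G]_n) : 'M[st G]_n :=
  \matrix_(i, j) sdet (sminor A j i).

Definition snabla (n : nat) (A : 'M[st G]_n) : 'M[st G]_n :=
  \matrix_(i, j) smul (sinv (sdet A)) (sadj A i j).

Definition sprinc (n : nat) (A : 'M[st G]_n) (S : {set 'I_n}) : 'M[st G]_(#|S|) :=
  \matrix_(a, b) A (enum_val a) (enum_val b).

(* k-th coefficient of f_M(x) = det(xI + M): the sum of the determinants of all
   (n-k)x(n-k) principal submatrices of M (meaningful for k <= n). *)
Definition scharcoef (n : nat) (M : 'M[st G]_n) (k : nat) : st G :=
  \big[sadd/NegInf]_(S : {set 'I_n} | #|S| == (n - k)%N) sdet (sprinc M S).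

Definition striangular (n : nat) (A : 'M[st G]_n) : Prop :=
  (forall i j : 'I_n, (i < j)%N -> A i j = NegInf) \/
  (forall i j : 'I_n, (j < i)%N -> A i j = NegInf).

Definition snonsingular (n : nat) (A : 'M[st G]_n) : bool := tangible (sdet A).

End Supertropical.

(* Main.v *)
Require Import Defs.
From HB Require Import structures.
From mathcomp Require Import all_boot all_order all_algebra all_fingroup.
From mathcomp Require Import zify.
Set Implicit Arguments. Unset Strict Implicit. Unset Printing Implicit Defensive.
Import GRing.Theory.

Definition cmp (b : bool) (x y : nat) := if b then x < y else y < x.

Lemma sum_ltn m (f g : 'I_m -> nat) i0 :
  (forall i, f i <= g i) -> f i0 < g i0 -> \sum_i f i < \sum_i g i.
Proof.
move=> H H0; rewrite (bigD1 i0) //= [X in _ < X](bigD1 i0) //=.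
by rewrite -addSn leq_add // leq_sum.
Qed.

Lemma perm_sum_exists b m (s : 'S_m) (f g : 'I_m -> nat) :
  cmp b (\sum_i f i) (\sum_i g i) -> exists a, cmp b (f a) (g (s a)).
Proof.
move=> H; case: (pickP (fun a => cmp b (f a) (g (s a)))) => [a Ha|H0]; first by exists a.
exfalso; have E : \sum_i g i = \sum_i g (s i) by apply: (reindex_inj (@perm_inj _ s)).
move: H; rewrite E /cmp; case: b H0 => H0.
  rewrite ltnNge leq_sum // => i _; have := H0 i; rewrite /cmp => /negbT.
  by rewrite -leqNgt.
rewrite ltnNge leq_sum // => i _; have := H0 i; rewrite /cmp => /negbT.
by rewrite -leqNgt.
Qed.

Lemma perm_exists b m (s : 'S_m) (h : 'I_m -> nat) :
  injective h -> s != 1%g -> exists a, cmp b (h a) (h (s a)).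
Proof.
move=> hi ns.
case: (pickP (fun a => s a != a)) => [a0 Ha0|H]; last first.
  by case/eqP: ns; apply/permP => i; rewrite perm1; apply/eqP; have := H i => /negbFE.
have ne : h (s a0) != h a0 by rewrite (inj_eq hi).
case: (pickP (fun a => cmp b (h a) (h (s a)))) => [a Ha|H0]; first by exists a.
exfalso.
have E : \sum_i h i = \sum_i h (s i) by apply: (reindex_inj (@perm_inj _ s)).
case: b H0 => H0.
  have : \sum_i h (s i) < \sum_i h i.
    apply: (sum_ltn (i0 := a0)) => [i|].
      by have := H0 i; rewrite /cmp => /negbT; rewrite -leqNgt.
    by have := H0 a0; rewrite /cmp => /negbT; rewrite -leqNgt leq_eqVlt (negbTE ne).
  by rewrite E ltnn.
have : \sum_i h i < \sum_i h (s i).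
  apply: (sum_ltn (i0 := a0)) => [i|].
    by have := H0 i; rewrite /cmp => /negbT; rewrite -leqNgt.
  by have := H0 a0; rewrite /cmp => /negbT; rewrite -leqNgt leq_eqVlt eq_sym (negbTE ne).
by rewrite E ltnn.
Qed.

Lemma sum_bump_lt m (c r : 'I_m.+1) : c < r ->
  \sum_(a < m) bump r a < \sum_(a < m) bump c a.
Proof.
move=> cr; have cm : c < m by rewrite (leq_trans cr) // -ltnS.
apply: (sum_ltn (i0 := Ordinal cm)) => [a|]; last first.
  by rewrite /bump /= leqnn (leqNgt r c) cr.
rewrite /bump leq_add2r; case: (leqP r a) => // ra.
by rewrite (leq_trans (ltnW cr) ra).
Qed.

Lemma smulA (G : zmodType) : associative (@smul G).
Proof. by case=> [|a|a] [|b|b] [|c|c] //=; rewrite addrA. Qed.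
Lemma smulC (G : zmodType) : commutative (@smul G).
Proof. by case=> [|a|a] [|b|b] //=; rewrite addrC. Qed.
Lemma smul1l (G : zmodType) : left_id (sone G) (@smul G).
Proof. by case=> [|a|a] //=; rewrite add0r. Qed.
HB.instance Definition _ (G : zmodType) :=
  Monoid.isComLaw.Build (st G) (sone G) (@smul G) (@smulA G) (@smulC G) (@smul1l G).

Section Alg.
Variables (G : zmodType) (le : rel G) (HG : ordered_abgroup le).

Lemma le_tot a b : le a b || le b a.
Proof. by case: HG => _ _ _ t _; apply: t. Qed.
Lemma le_anti a b : le a b -> le b a -> a = b.
Proof. by case: HG => _ an _ _ _ h1 h2; apply: an; rewrite h1 h2. Qed.
Lemma le_trans a b c : le a b -> le b c -> le a c.
Proof. by case: HG => _ _ tr _ _ h1 h2; apply: (tr b). Qed.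
Lemma le_refl a : le a a.
Proof. by case: HG => r _ _ _ _; apply: r. Qed.
Lemma le_add2r c a b : le (a + c)%R (b + c)%R = le a b.
Proof.
case: HG => _ _ _ _ tr; apply/idP/idP => h; last exact: tr.
by have := tr _ _ (- c)%R h; rewrite !addrK.
Qed.
Lemma le_add2l c a b : le (c + a)%R (c + b)%R = le a b.
Proof. by rewrite ![(c + _)%R]addrC le_add2r. Qed.

Ltac ordsat :=
  repeat match goal with
  | H1 : is_true (le ?a ?b), H2 : is_true (le ?b ?c) |- _ =>
      lazymatch goal with
      | _ : is_true (le a c) |- _ => fail
      | _ => have := le_trans H1 H2; move=> ?
      end
  end.

Ltac ordsolve :=
  repeat match goal with
  | H : (?a == ?b) = true |- _ => move/eqP: H => H; subst
  | H : is_true (?a == ?b) |- _ => move/eqP: H => H; subst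
  | H : (?a == ?a) = false |- _ => by rewrite eqxx in H
  | H : le ?a ?b = false |- _ =>
      have := le_tot a b; rewrite H /= => ?; clear H
  end;
  try done;
  ordsat;
  repeat match goal with
  | H : (?a == ?a) = false |- _ => by rewrite eqxx in H
  | H1 : is_true (le ?a ?b), H2 : is_true (le ?b ?a) |- _ =>
      have ? := le_anti H1 H2; clear H1 H2; subst
  end; try done;
  repeat match goal with
  | H : (?a == ?a) = false |- _ => by rewrite eqxx in H
  end.

Lemma saddC : commutative (sadd le).
Proof.
case=> [|a|a] [|b|b] //=; rewrite [b == a]eq_sym;
  case: eqP => [->//|ne]; case: ifP => h1; case: ifP => h2 //;
  ordsolve.
Qed.

Lemma saddA : associative (sadd le).
Proof.
case=> [|a|a] [|b|b] [|c|c] //=;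
  repeat (case: ifP => ? /=); ordsolve.
Qed.

Lemma sadd0l : left_id NegInf (sadd le). Proof. by []. Qed.
Lemma sadd0r : right_id NegInf (sadd le). Proof. by case. Qed.

HB.instance Definition _ := Monoid.isComLaw.Build (st G) NegInf (sadd le) saddA saddC sadd0l.

Lemma smul_dist c x y :
  smul (Tan c) (sadd le x y) = sadd le (smul (Tan c) x) (smul (Tan c) y).
Proof.
case: x => [|a|a]; case: y => [|b|b] //=;
  rewrite ?(inj_eq (addrI c)) ?le_add2l; by case: (_ == _) => //; case: ifP.
Qed.

Lemma big_smul_dist c I (r : seq I) (P : pred I) F :
  smul (Tan c) (\big[sadd le/NegInf]_(i <- r | P i) F i) =
  \big[sadd le/NegInf]_(i <- r | P i) smul (Tan c) (F i).
Proof.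
elim: r => [|x r IH]; first by rewrite !big_nil.
by rewrite !big_cons; case: (P x); rewrite ?smul_dist IH.
Qed.


Lemma smulr0 x : smul x (@NegInf G) = NegInf. Proof. by case: x. Qed.

Lemma prod_negInf m (F : 'I_m -> st G) i : F i = NegInf ->
  \big[@smul G/sone G]_j F j = NegInf.
Proof. by move=> Fi; rewrite (bigD1 i) //= Fi. Qed.

Lemma sdet_tri b m (M : 'M[st G]_m) (h : 'I_m -> nat) : injective h ->
  (forall i j, cmp b (h i) (h j) -> M i j = NegInf) ->
  sdet le M = \big[@smul G/sone G]_i M i i.
Proof.
move=> hi HM; rewrite /sdet (bigD1 1%g) //= [X in sadd _ _ X]big1 ?sadd0r.
  by apply: eq_bigr => i _; rewrite perm1.
move=> s ns; have [a Ha] := perm_exists b hi ns.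
by apply: (prod_negInf (i:=a)); apply: HM.
Qed.

Lemma prod_Tan I (r : seq I) (P : pred I) (f : I -> G) :
  \big[@smul G/sone G]_(i <- r | P i) Tan (f i) = Tan (\sum_(i <- r | P i) f i)%R.
Proof.
by rewrite (big_morph (@Tan G) (op1 := @smul G) (id1 := sone G)).
Qed.

Lemma prod_tan m (F : 'I_m -> st G) : tangible (\big[@smul G/sone G]_i F i) ->
  forall i, F i = Tan (nu (F i)).
Proof.
move=> T i; move: T; rewrite (bigD1 i) //=.
by case: (F i) => //= a; case: (\big[_/_]_(_ | _) _).
Qed.

Lemma insubd_bump m (r : 'I_m.+1) (a : 'I_m) : insubd r (bump r a) = lift r a.
Proof.
apply: val_inj; rewrite val_insubd /=.
by have -> : bump r a < m.+1 := ltn_ord (lift r a).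
Qed.

Lemma sminorE m (A : 'M[st G]_m.+1) r c a b :
  sminor A r c a b = A (lift r a) (lift c b).
Proof. by rewrite mxE !insubd_bump. Qed.

Lemma nabla_tri b n (A : 'M[st G]_n) :
  (forall i j : 'I_n, cmp b i j -> A i j = NegInf) ->
  forall i j : 'I_n, cmp b i j -> snabla le A i j = NegInf.
Proof.
case: n A => [|m] A HA i j ij; first by case: i ij.
rewrite /snabla /sadj !mxE.
suff -> : sdet le (sminor A j i) = NegInf by rewrite smulr0.
rewrite /sdet big1 // => s _.
have [a Ha] : exists a : 'I_m, cmp b (bump j a) (bump i (s a)).
  have H : cmp b (\sum_(a < m) bump j a) (\sum_(a < m) bump i a).
    by case: b {HA} ij => ij; exact: (sum_bump_lt ij).
  have [a Ha] := @perm_sum_exists b m s (fun a => bump j a) (fun a => bump i a) H.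
  by exists a.
by apply: (prod_negInf (i:=a)); rewrite sminorE; apply: HA.
Qed.

Lemma nabla_diag b n (A : 'M[st G]_n) (g : 'I_n -> G) :
  (forall i j : 'I_n, cmp b i j -> A i j = NegInf) ->
  (forall i, A i i = Tan (g i)) ->
  forall i, snabla le A i i = Tan (- g i)%R.
Proof.
case: n A g => [|m] A g HA Ag i; first by case: i.
rewrite /snabla /sadj !mxE.
have dA : sdet le A = Tan (\sum_j g j)%R.
  rewrite (sdet_tri (b:=b) (h := fun i => nat_of_ord i)) //; last exact: val_inj.
  by rewrite (eq_bigr (fun i => Tan (g i))) ?prod_Tan // => j _; rewrite Ag.
have dm : sdet le (sminor A i i) = Tan (\sum_a g (lift i a))%R.
  rewrite (sdet_tri (b:=b) (h := fun a => nat_of_ord (lift i a))).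
  - by rewrite (eq_bigr (fun a => Tan (g (lift i a)))) ?prod_Tan // => a _; rewrite sminorE Ag.
  - by move=> x y /val_inj/lift_inj.
  - by move=> x y Hxy; rewrite sminorE HA.
by rewrite dA dm (bigD1_ord i) //= opprD addrNK.
Qed.

Lemma dprinc b n (M : 'M[st G]_n) (f : 'I_n -> G) (S : {set 'I_n}) :
  (forall i j : 'I_n, cmp b i j -> M i j = NegInf) ->
  (forall i, M i i = Tan (f i)) ->
  sdet le (sprinc M S) = Tan (\sum_(i in S) f i)%R.
Proof.
move=> HM Mf.
rewrite (@sdet_tri b _ _ (fun a => nat_of_ord (enum_val a))).
- under eq_bigr => a _ do rewrite mxE Mf.
  by rewrite prod_Tan; congr Tan; rewrite (big_enum_val (A := mem S)).
- by move=> x y /val_inj/enum_val_inj.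
- by move=> x y H; rewrite mxE; apply: HM.
Qed.

Theorem main_sec n (A : 'M[st G]_n) :
  striangular A -> snonsingular le A ->
  forall k : nat, (k <= n)%N ->
    smul (sdet le A) (scharcoef le (snabla le A) k) = scharcoef le A (n - k).
Proof.
move=> Htri Hns k kn.
have [b HA] : exists b, forall i j : 'I_n, cmp b i j -> A i j = NegInf.
  by case: Htri => H; [exists true | exists false]; exact: H.
have detA : sdet le A = \big[@smul G/sone G]_i A i i.
  by apply: (sdet_tri (b:=b) (h := fun i => nat_of_ord i)) => //; exact: val_inj.
pose g := fun i => nu (A i i).
have Ag : forall i, A i i = Tan (g i) by apply: prod_tan; rewrite -detA.
have detA' : sdet le A = Tan (\sum_i g i)%R.
  by rewrite detA (eq_bigr _ (fun i _ => Ag i)) prod_Tan.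
have Nd := nabla_diag HA Ag.
rewrite detA' /scharcoef big_smul_dist.
rewrite (eq_bigr (fun S => Tan (\sum_(i in ~:S) g i)%R)) => [|S _]; last first.
  rewrite (@dprinc b _ _ (fun i => - g i)%R _ (nabla_tri HA) Nd) /=.
  congr Tan; rewrite (bigID (mem S)) /= sumrN.
  rewrite addrAC subrr add0r; by apply: eq_bigl => i; rewrite in_setC.
rewrite (subKn kn) [RHS](eq_bigr (fun T : {set 'I_n} => Tan (\sum_(i in T) g i)%R)) => [|T _]; last first.
  exact: dprinc HA Ag.
rewrite (reindex_inj (@setC_inj _)) /=.
apply: eq_big => [S|S _]; last by rewrite setCK.
have Sn : #|S| <= n by rewrite -[X in _ <= X](card_ord n) max_card.
move: Sn; set x := #|S| => Sn.
have -> : #|~: S| = (n - #|S|)%N by rewrite cardsCs setCK card_ord.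
by apply/eqP/eqP; lia.
Qed.
End Alg.

Theorem mainTheorem10 (G : zmodType) (le : rel G) (HG : ordered_abgroup le)
  (n : nat) (A : 'M[st G]_n) :
  striangular A -> snonsingular le A ->
  forall k : nat, (k <= n)%N ->
    smul (sdet le A) (scharcoef le (snabla le A) k) = scharcoef le A (n - k).
Proof. exact: main_sec. Qed.
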